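(* Let $k$ be an odd integer with $k\ge 5$, let $D$ be a strong $k$-quasi-transitive digraph with $\mathrm{diam}(D)\ge k+2$, let $u,v\in V(D)$ with $d(u,v)=k+2$, and let $P=x_0x_1\ldots x_{k+2}$ be a shortest $(u,v)$-path with $x_0=u$, $x_{k+2}=v$. Suppose $D[V(P)]$ is a semicomplete digraph. Then for any $x\in V(D)\setminus V(P)$ and $x_i\in V(P)$: if $x\rightarrow x_i$, then $x$ is adjacent to every vertex of $\{x_0,x_1,\ldots,x_{i-1}\}$; if $x_i\rightarrow x$, then $x$ is adjacent to every vertex of $\{x_{i+1},x_{i+2},\ldots,x_{k+2}\}$.
   Context: All digraphs are finite, without loops or multiple arcs (opposite arcs allowed). $x\rightarrow y$ means $xy\in A(D)$; $x,y$ are adjacent if $x\rightarrow y$ or $y\rightarrow x$. For $k\ge 2$, $D$ is $k$-quasi-transitive if for every path $x_0x_1\ldots x_k$ of length $k$, $x_0$ and $x_k$ are adjacent. $d(x,y)$ is the length of a shortest $(x,y)$-path, $\mathrm{diam}(D)=\max_{x,y}d(x,y)$. $D[S]$ is the induced subdigraph. A semicomplete digraph: every two distinct vertices adjacent. *)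

(* Defs.v *)
From mathcomp Require Import all_boot.
Set Implicit Arguments. Unset Strict Implicit. Unset Printing Implicit Defensive.

(* A digraph on a finite vertex type T is given by its arc relation
   [arc : rel T]; [arc x y] means x -> y.  Loops are excluded by a separate
   irreflexivity hypothesis; opposite arcs are allowed. *)
Section Digraph.
Variables (T : finType) (arc : rel T).

Definition adj (x y : T) : bool := arc x y || arc y x.

(* A (directed) path: a nonempty sequence of pairwise distinct vertices,
   consecutive ones joined by arcs.  Its length is [size s - 1]. *)
Definition is_dpath (s : seq T) : bool :=
  if s is a :: s' then path arc a s' && uniq s else false.

Definition dpath_from (u v : T) (s : seq T) : bool :=
  [&& is_dpath s, nth u s 0 == u & last u s == v].

Definition k_quasi_transitive (k : nat) : Prop :=
  forall (a : T) (s : seq T), is_dpath (a :: s) -> size s = k ->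
    adj a (last a s).

Definition strong : Prop :=
  forall u v : T, exists s : seq T, dpath_from u v s.

Definition dist_eq (u v : T) (n : nat) : Prop :=
  (exists s : seq T, dpath_from u v s && (size s == n.+1)) /\
  (forall s : seq T, dpath_from u v s -> n.+1 <= size s).

Definition diam_ge (n : nat) : Prop :=
  exists u v : T, (exists s, dpath_from u v s) /\
    (forall s : seq T, dpath_from u v s -> n.+1 <= size s).

End Digraph.

(* Main.v *)
Require Import Defs.
From mathcomp Require Import all_boot.
From mathcomp Require Import zify.

Definition R (a c : nat) : bool := (c == a.+1) || (c.+2 <= a).

Lemma last_iotaS n : forall m, last m (iota m.+1 n) = m + n.
Proof. elim: n => [|n IH] m /=; first by rewrite addn0. by rewrite IH addnS. Qed.

Lemma last_iota1 n : forall m d, last d (iota m n.+1) = m + n.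
Proof. move=> m d /=. exact: last_iotaS. Qed.

Lemma path_iota (e : rel nat) n : forall m,
  (forall t, m <= t -> t < m + n -> e t t.+1) -> path e m (iota m.+1 n).
Proof.
elim: n => [|n IH] m H //=.
rewrite H ?addnS ?ltnS ?leqnn ?leq_addr //=.
apply: IH => t H1 H2; apply: H; lia.
Qed.

Lemma pathR_head m n rest : path R m (iota m.+1 n ++ rest) = path R (m + n) rest.
Proof.
rewrite cat_path last_iotaS path_iota //= => t _ _; by rewrite /R eqxx.
Qed.

Lemma pathR_seg a s n rest : R a s -> path R (s + n) rest -> path R a (iota s n.+1 ++ rest).
Proof. move=> H1 H2 /=. by rewrite H1 pathR_head. Qed.

Lemma key k i j : 3 <= k -> j < i -> i <= k.+2 -> exists t : seq nat,
  [/\ size t = k.-1, last i t = j, uniq (i :: t), all (fun a => a <= k.+2) t & path R i t].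
Proof.
move=> Hk Hji Hik.
case: (leqP (i - j) 4) => Hd.
- have [q' Hq'] : exists q', q'.+1 = minn j.+1 k.-1 by exists (minn j.+1 k.-1).-1; lia.
  have Hq1 : q'.+1 <= j.+1 by rewrite Hq' geq_minl.
  have Hq2 : q'.+1 <= k.-1 by rewrite Hq' geq_minr.
  have Hq3 : q'.+1 = j.+1 \/ q'.+1 = k.-1 by move: Hq'; rewrite /minn; case: ifP; lia.
  clear Hq'.
  pose p' := k.-2 - q'.
  exists (iota i.+1 p' ++ iota (j - q') q'.+1); split.
  + rewrite size_cat !size_iota /p'; lia.
  + rewrite last_cat last_iota1; lia.
  + rewrite -cat_cons. change (i :: iota i.+1 p') with (iota i p'.+1).
    rewrite cat_uniq !iota_uniq andbT. apply/hasPn => a; rewrite !mem_iota /p'; lia.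
  + rewrite all_cat; apply/andP; split; apply/allP => a; rewrite mem_iota /p'; lia.
  + rewrite pathR_head. rewrite -[iota _ _]cats0. apply: pathR_seg => //.
    rewrite /R /p'; apply/orP; right; lia.
- exists (iota i.+1 (k.+2 - i) ++ iota (j.+2) (i - j - 5).+1 ++ iota 0 j.+1); split.
  + rewrite !size_cat !size_iota; lia.
  + rewrite !last_cat !last_iota1; lia.
  + rewrite -cat_cons. change (i :: iota i.+1 (k.+2 - i)) with (iota i (k.+2 - i).+1).
    rewrite !cat_uniq !iota_uniq andbT has_cat negb_or.
    repeat (apply/andP; split) => //; apply/hasPn => a; rewrite !mem_iota; lia.
  + rewrite !all_cat; apply/and3P; split; apply/allP => a; rewrite mem_iota; lia.
  + rewrite pathR_head. apply: pathR_seg; first by rewrite /R; apply/orP; right; lia.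
    rewrite -[iota 0 _]cats0. apply: pathR_seg => //; rewrite /R; apply/orP; right; lia.
Qed.

Theorem lemma2p7 (T : finType) (arc : rel T) (k : nat) (u v : T) (x : nat -> T) :
  irreflexive arc ->
  odd k -> 5 <= k ->
  strong arc -> k_quasi_transitive arc k ->
  diam_ge arc k.+2 ->
  dist_eq arc u v k.+2 ->
  (* P = x_0 x_1 ... x_{k+2} is a shortest (u,v)-path *)
  x 0 = u -> x k.+2 = v ->
  dpath_from arc u v (mkseq x k.+3) ->
  (* D[V(P)] is semicomplete *)
  (forall i j, i < k.+3 -> j < k.+3 -> i != j -> adj arc (x i) (x j)) ->
  forall y : T, y \notin mkseq x k.+3 ->
  forall i, i < k.+3 ->
    (arc y (x i) -> forall j, j < i -> adj arc y (x j)) /\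
    (arc (x i) y -> forall j, i < j -> j < k.+3 -> adj arc y (x j)).
Proof.
move=> Hirr Hodd Hk Hstr Hqt Hdiam [_ Hmin] Hx0 HxN Hdp Hsc y Hy i Hi.
move/and3P: Hdp => [Hdp _ _].
have Hmk : mkseq x k.+3 = x 0 :: map x (iota 1 k.+2) by [].
move: Hdp; rewrite Hmk /is_dpath => /andP [Hpath Huniq].
rewrite -Hmk in Huniq.
have F1 : forall a, a < k.+2 -> arc (x a) (x a.+1).
  move=> a Ha. rewrite path_map in Hpath.
  move/(pathP 0): Hpath => /(_ a); rewrite size_iota => /(_ Ha).
  rewrite -/(iota 0 k.+3) !nth_iota //; lia.
have F2 : forall a b, a < k.+3 -> b < k.+3 -> x a = x b -> a = b.
  move=> a b Ha Hb E; apply/eqP.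
  by rewrite -(nth_uniq (x 0) _ _ Huniq) ?size_mkseq // !nth_mkseq // E.
have Inj : forall L : seq nat, all (fun a => a < k.+3) L -> {in L &, injective x}.
  move=> L HL a b Ha Hb; apply: F2; [exact: (allP HL) | exact: (allP HL)].
have F3 : forall a c, a.+2 <= c -> c <= k.+2 -> ~~ arc (x a) (x c).
  move=> a c Hac Hc; apply/negP => Harc.
  pose L := iota 1 a ++ c :: iota c.+1 (k.+2 - c).
  have HL : all (fun b => b < k.+3) (0 :: L).
    apply/allP => b; rewrite /L !(inE, mem_cat, mem_iota); lia.
  have := Hmin (map x (0 :: L)).
  rewrite /= size_map /L size_cat /= !size_iota.
  have -> : (dpath_from arc u v (x 0 :: map x L)).
    apply/and3P; split; last first.
    - rewrite /= last_map (_ : last 0 L = k.+2) ?HxN //.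
      by rewrite /L last_cat /= last_iotaS; lia.
    - by rewrite /= Hx0.
    rewrite /is_dpath; apply/andP; split.
    - rewrite path_map cat_path /= last_iotaS add0n Harc /=; apply/andP; split.
      + apply: path_iota => t _ Ht; apply: F1; lia.
      + apply: path_iota => t _ Ht; apply: F1; lia.
    - have -> : x 0 :: map x L = map x (0 :: L) by [].
      rewrite map_inj_in_uniq; last exact: Inj.
      rewrite /L -cat_cons cat_uniq; apply/and3P; split.
      + exact: (iota_uniq 0 a.+1).
      + apply/hasPn => b; rewrite !(inE, mem_iota); lia.
      + exact: (iota_uniq c (k.+2 - c).+1).
  move=> /(_ isT); lia.
have ER : forall a c, R a c -> a < k.+3 -> c < k.+3 -> arc (x a) (x c).
  move=> a c /orP [/eqP -> | H] Ha Hc; first by apply: F1; lia.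
  have Hne : a != c by apply/eqP; lia.
  move: (Hsc a c Ha Hc Hne); rewrite /adj => /orP [//|H'].
  have Hc' : a <= k.+2 by lia.
  by move: (F3 c a H Hc'); rewrite H'.
have Pth : forall h t, h < k.+3 -> all (fun a => a < k.+3) t -> path R h t ->
    path arc (x h) (map x t).
  move=> h t Hh Ht Hp; rewrite path_map.
  apply: (sub_in_path (P := fun a => a < k.+3)) Hp; last by rewrite /= Hh.
  move=> a c Ha Hc HR; exact: ER.
have Yn : forall a, a < k.+3 -> x a != y.
  move=> a Ha; apply/eqP => E; move: Hy; rewrite -E /mkseq.
  by rewrite map_f // mem_iota.
have Hb : forall t, all (fun a => a <= k.+2) t -> all (fun a => a < k.+3) t by [].
split.
- move=> Hyx j Hj.
  have [t [Hs Hl Hu Ha Hp]] := @key k i j (ltac:(lia)) Hj (ltac:(lia)).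
  have := Hqt y (map x (i :: t)).
  rewrite size_map /= Hs last_map Hl.
  apply => //; [| lia].
  rewrite /= Hyx Pth //=.
  apply/andP; split; last first.
    have -> : (x i \notin map x t) && uniq (map x t) = uniq (map x (i::t)) by [].
    by rewrite map_inj_in_uniq // ; apply: Inj; rewrite /= Hi; exact: Ha.
  change (y \notin map x (i :: t)); apply/negP => /mapP [a Ha' E].
  move: Ha' Ha; rewrite inE => /orP [/eqP Ea|Hat] Ha; first by move/eqP: (Yn i Hi); rewrite -Ea E.
  by move/eqP: (Yn a (allP Ha a Hat)); rewrite E.
- move=> Hxy j Hij Hj.
  have [t [Hs Hl Hu Ha Hp]] := @key k j i (ltac:(lia)) Hij (ltac:(lia)).
  have := Hqt (x j) (rcons (map x t) y).
  rewrite size_rcons size_map Hs last_rcons /adj orbC.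
  apply => //; [| lia].
  rewrite /= rcons_path Pth //= last_map Hl Hxy /=.
  change (uniq (x j :: rcons (map x t) y)); rewrite -rcons_cons rcons_uniq.
  change ((y \notin map x (j :: t)) && uniq (map x (j :: t))).
  rewrite map_inj_in_uniq ?Hu ?andbT; last by apply: Inj; rewrite /= Hj; exact: Ha.
  apply/negP.
  move=> /mapP [a Ha' E].
  move: Ha' Ha; rewrite inE => /orP [/eqP Ea|Hat] Ha; first by move/eqP: (Yn j Hj); rewrite -Ea E.
  by move/eqP: (Yn a (allP Ha a Hat)); rewrite E.
Qed.
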